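(* Let $(a_i)_{i\ge1},(b_i)_{i\ge1}$ be positive reals, let $V_i\sim\mathrm{Beta}(a_i,b_i)$ be independent, and let $\Pi$ be the law of $\mathbf p=(p_i)_{i\ge1}$ with $p_1=V_1$, $p_i=V_i\prod_{l<i}(1-V_l)$. Then for every $\epsilon>0$ and every $\mathbf p^*\in\mathcal S$, $$\Pi\big(\mathbf p:\ \|\mathbf p^*-\mathbf p\|_1<\epsilon\big)>0,$$ where $\|\mathbf p^*-\mathbf p\|_1=\sum_{i\ge1}|p^*_i-p_i|$.
   Context: $\mathcal S=\{\mathbf p=(p_i)_{i\ge1}:\ \sum_{i\ge1}p_i=1,\ p_i>0\ \forall i\ge1\}$ is the infinite-dimensional open simplex. *)

(* Defs.v *)
From HB Require Import structures.
From mathcomp Require Import all_boot all_order all_algebra.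
From mathcomp Require Import all_classical all_reals all_analysis.
Set Implicit Arguments.
Unset Strict Implicit.
Unset Printing Implicit Defensive.
Import Order.TTheory GRing.Theory Num.Theory.
Local Open Scope classical_set_scope.
Local Open Scope ring_scope.

Definition beta_density {R : realType} (a b : R) (x : R) : R :=
  x `^ (a - 1) * (1 - x) `^ (b - 1).

Definition has_beta_law {d} {T : measurableType d} {R : realType}
    (P : probability T R) (V : T -> R) (a b : R) : Prop :=
  forall A : set R, measurable A ->
    P (V @^-1` A) =
      ((\int[lebesgue_measure]_(x in A `&` `]0%R, 1%R[) (beta_density a b x)%:E) *
       ((\int[lebesgue_measure]_(x in `]0%R, 1%R[) (beta_density a b x)%:E)^-1))%E.

Definition mutually_independent {d} {T : measurableType d} {R : realType}
    (P : probability T R) (V : nat -> T -> R) : Prop :=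
  forall (I : seq nat) (B : nat -> set R),
    uniq I -> (forall i, measurable (B i)) ->
    P (\bigcap_(i in [set` I]) (V i @^-1` B i)) =
      (\prod_(i <- I) P (V i @^-1` B i))%E.

(* Stick-breaking weights: p_i = V_i * prod_{l<i} (1 - V_l)  (indices from 0). *)
Definition stick_breaking {T} {R : realType} (V : nat -> T -> R) (w : T) (i : nat) : R :=
  V i w * \prod_(l < i) (1 - V l w).

Definition open_simplex {R : realType} : set (nat -> R) :=
  [set p | (forall i, 0 < p i) /\ (\sum_(i <oo) (p i)%:E)%E = 1%E].

(* l1 distance (as an extended real, always well defined). *)
Definition l1_dist {R : realType} (p q : nat -> R) : \bar R :=
  (\sum_(i <oo) (`|p i - q i|)%:E)%E.

(* Main.v *)
Require Import Defs.
From HB Require Import structures.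
From mathcomp Require Import all_boot all_order all_algebra.
From mathcomp Require Import all_classical all_reals all_analysis.
From mathcomp Require Import measurable_realfun.
From mathcomp Require Import ring lra.
Import Order.TTheory GRing.Theory Num.Theory.
Local Open Scope classical_set_scope.
Local Open Scope ring_scope.

Lemma sum_split (R : numDomainType) (f : nat -> R) m n : (m <= n)%N ->
  \sum_(i < n) f i = \sum_(i < m) f i + \sum_(m <= i < n) f i.
Proof.
move=> mn; rewrite -(big_mkord xpredT f) -(big_mkord xpredT f).
by rewrite (@big_cat_nat _ _ _ m).
Qed.

Section Det.
Variable R : realType.

Lemma mul_close (x y u v : R) : 0 <= x <= 1 -> 0 <= y <= 1 -> 0 <= u <= 1 -> 0 <= v <= 1 ->
  `|x * u - y * v| <= `|x - y| + `|u - v|.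
Proof.
move=> /andP[x0 x1] /andP[y0 y1] /andP[u0 u1] /andP[v0 v1].
have -> : x * u - y * v = (x - y) * u + y * (u - v) by ring.
apply: (le_trans (ler_normD _ _)); rewrite !normrM.
apply: lerD.
  rewrite -[leRHS]mulr1; apply: ler_wpM2l => //; by rewrite ger0_norm.
rewrite -[leRHS]mul1r; apply: ler_wpM2r => //; by rewrite ger0_norm.
Qed.

Lemma prod_close n (x y : nat -> R) :
  (forall i, (i < n)%N -> 0 <= x i <= 1 /\ 0 <= y i <= 1) ->
  `|\prod_(i < n) x i - \prod_(i < n) y i| <= \sum_(i < n) `|x i - y i|.
Proof.
elim: n => [|n IH] H; first by rewrite !big_ord0 subrr normr0.
rewrite !big_ord_recr /=.
have H' : forall i, (i < n)%N -> 0 <= x i <= 1 /\ 0 <= y i <= 1.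
  by move=> i ?; apply: H; apply: ltnW.
have [hx hy] := H n (ltnSn n).
have h1 : 0 <= \prod_(i < n) x i <= 1.
  apply/andP; split; [apply: prodr_ge0 | apply: prodr_ile1] => i _; have [/andP[h3 h4] _] := H' i (ltn_ord i) => //; exact/andP.
have h2 : 0 <= \prod_(i < n) y i <= 1.
  apply/andP; split; [apply: prodr_ge0 | apply: prodr_ile1] => i _; have [_ /andP[h3 h4]] := H' i (ltn_ord i) => //; exact/andP.
apply: le_trans; first exact: (mul_close _ _ _ _ h1 h2 hx hy).
by rewrite lerD2r; apply: IH.
Qed.

Lemma stick_tel (v : nat -> R) M :
  \sum_(i < M) (v i * \prod_(l < i) (1 - v l)) = 1 - \prod_(l < M) (1 - v l).
Proof.
elim: M => [|M IH]; first by rewrite !big_ord0 subrr.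
by rewrite big_ord_recr /= IH big_ord_recr /=; ring.
Qed.

Lemma sum_le_const n (f : nat -> R) c : (forall i, (i < n)%N -> f i <= c) ->
  \sum_(i < n) f i <= n%:R * c.
Proof.
move=> H; apply: (@le_trans _ _ (\sum_(i < n) c)).
  by apply: ler_sum => i _; apply: H.
by rewrite sumr_const card_ord mulr_natl.
Qed.

Lemma eseries_le (u : nat -> \bar R) (x : \bar R) : (forall n, (0 <= u n)%E) ->
  (forall n, (\sum_(0 <= i < n) u i <= x)%E) -> (\sum_(i <oo) u i <= x)%E.
Proof.
move=> u0 H; apply: lime_le; first exact: is_cvg_nneseries.
exact: nearW.
Qed.

Lemma simplex_psum_le1 (p : nat -> R) : open_simplex p -> forall k, \sum_(i < k) p i <= 1.
Proof.
case=> p0 ps k.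
have := @nneseries_lim_ge R (fun i => (p i)%:E) xpredT 0 k.
rewrite ps sumEFin lee_fin big_mkord; apply => n _ _.
by rewrite lee_fin ltW.
Qed.

Lemma simplex_tail (p : nat -> R) eps : open_simplex p -> 0 < eps ->
  exists N, 1 - \sum_(i < N) p i < eps.
Proof.
move=> ps e0; have [//|H] := pselect (exists N, 1 - \sum_(i < N) p i < eps).
have H' : forall N, \sum_(i < N) p i <= 1 - eps.
  move=> N; have : ~ (1 - \sum_(i < N) p i < eps) by move=> h; apply: H; exists N.
  rewrite ltNge => /negP; rewrite negbK => h; lra.
case: ps => p0 ps.
have : (\sum_(i <oo) (p i)%:E <= (1 - eps)%:E)%E.
  apply: eseries_le => [n|n]; first by rewrite lee_fin ltW.
  by rewrite big_mkord sumEFin lee_fin.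
rewrite ps lee_fin; lra.
Qed.

Lemma simplex_v (p : nat -> R) : open_simplex p -> exists v : nat -> R,
  [/\ (forall i, 0 < v i < 1),
      (forall k, \prod_(l < k) (1 - v l) = 1 - \sum_(i < k) p i) &
      (forall i, p i = v i * \prod_(l < i) (1 - v l))].
Proof.
move=> ps; have le1 := @simplex_psum_le1 p ps; case: ps => p0 _.
have key : forall i, p i < 1 - \sum_(l < i) p l.
  move=> i; have := le1 i.+2; rewrite !big_ord_recr /=.
  have := p0 i.+1; lra.
exists (fun i => p i / (1 - \sum_(l < i) p l)).
have pos : forall i, 0 < 1 - \sum_(l < i) p l.
  by move=> i; have := key i; have := p0 i; lra.
have prodE : forall k, \prod_(l < k) (1 - p l / (1 - \sum_(m < l) p m)) = 1 - \sum_(i < k) p i.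
  elim=> [|k IH]; first by rewrite !big_ord0 subr0.
  rewrite big_ord_recr /= IH big_ord_recr /=.
  have := pos k; set s := \sum_(i < k) p i => sk.
  field; lra.
split.
- move=> i; apply/andP; split; first by rewrite divr_gt0.
  by rewrite ltr_pdivrMr ?mul1r.
- exact: prodE.
- move=> i; rewrite prodE; have := pos i; set s := \sum_(i < i) p i => si.
  field; lra.
Qed.


Lemma det_bound (pstar v x : nat -> R) (N : nat) (delta eps : R) :
  open_simplex pstar ->
  (forall k, \prod_(l < k) (1 - v l) = 1 - \sum_(i < k) pstar i) ->
  (forall i, pstar i = v i * \prod_(l < i) (1 - v l)) ->
  (forall i, 0 < v i < 1) ->
  (forall i, 0 <= x i <= 1) ->
  (forall i, (i < N)%N -> `|x i - v i| < delta) ->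
  1 - \sum_(i < N) pstar i < eps / 4 ->
  delta * (4 * (N%:R * N%:R + 1)) = eps -> 0 < eps ->
  (l1_dist pstar (fun i => (x i * \prod_(l < i) (1 - x l))%R) < eps%:E)%E.
Proof.
move=> ps prodv pv v01 x01 close tailN hdelta e0.
have le1 := @simplex_psum_le1 pstar ps.
have d0 : 0 < delta.
  have : 0 < 4 * (N%:R * N%:R + 1) :> R.
    by apply: mulr_gt0 => //; apply: ltr_wpDl => //; apply: mulr_ge0.
  move=> h; rewrite -hdelta in e0; by rewrite (pmulr_lgt0 _ h) in e0.
have v01' : forall i, 0 <= v i <= 1 by move=> i; have /andP[? ?] := v01 i; apply/andP; split; lra.
have cl1 : forall i, 0 <= 1 - x i <= 1 by move=> i; have /andP[? ?] := x01 i; apply/andP; split; lra.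
have cl2 : forall i, 0 <= 1 - v i <= 1 by move=> i; have /andP[? ?] := v01' i; apply/andP; split; lra.
have prodsum : forall k, (k <= N)%N ->
    `|\prod_(l < k) (1 - v l) - \prod_(l < k) (1 - x l)| <= k%:R * delta.
  move=> k kN; apply: le_trans; first exact: (prod_close k (fun l => 1 - v l) (fun l => 1 - x l) (fun i _ => conj (cl2 i) (cl1 i))).
  apply: (sum_le_const k (fun i => `|1 - v i - (1 - x i)|)) => i ik /=.
  have -> : 1 - v i - (1 - x i) = x i - v i by ring.
  by apply: ltW; apply: close; apply: leq_trans kN.
set q := fun i => x i * \prod_(l < i) (1 - x l).
have termb : forall i, (i < N)%N -> `|pstar i - q i| <= N%:R * delta.
  move=> i iN; rewrite pv /q.
  have h1 : 0 <= \prod_(l < i) (1 - v l) <= 1.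
    by apply/andP; split; [apply: prodr_ge0 | apply: prodr_ile1] => l _; have /andP[? ?] := cl2 l => //; apply/andP.
  have h2 : 0 <= \prod_(l < i) (1 - x l) <= 1.
    by apply/andP; split; [apply: prodr_ge0 | apply: prodr_ile1] => l _; have /andP[? ?] := cl1 l => //; apply/andP.
  apply: le_trans; first exact: (mul_close _ _ _ _ (v01' i) (x01 i) h1 h2).
  have := prodsum i (ltnW iN); have := close i iN.
  rewrite distrC => c1 c2.
  have : i%:R + 1 <= N%:R :> R by rewrite natr1 ler_nat.
  move=> iN'; nra.
set T := 1 - \sum_(i < N) pstar i.
set Q := \prod_(l < N) (1 - x l).
set D := \sum_(i < N) `|pstar i - q i|.
have T0 : 0 <= T by rewrite /T subr_ge0.
have Q0 : 0 <= Q by apply: prodr_ge0 => l _; have /andP[] := cl1 l.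
have Db : D <= N%:R * (N%:R * delta) by apply: (sum_le_const N (fun i => `|pstar i - q i|)) => i iN; apply: termb.
have QT : Q <= T + N%:R * delta.
  have := prodsum N (leqnn N); rewrite prodv -/T -/Q => h.
  move: h; rewrite ler_norml => /andP[h1 h2]; lra.
have partial : forall M, \sum_(i < M) `|pstar i - q i| <= D + T + Q.
  move=> M; case: (leqP M N) => MN.
    have : \sum_(i < M) `|pstar i - q i| <= D.
      rewrite /D (@sum_split R (fun i => `|pstar i - q i|) M N MN) lerDl.
      by apply: sumr_ge0.
    lra.
  rewrite (@sum_split R (fun i => `|pstar i - q i|) N M (ltnW MN)) -/D.
  have s1 : \sum_(N <= i < M) `|pstar i - q i| <=
      \sum_(N <= i < M) pstar i + \sum_(N <= i < M) q i.
    rewrite -big_split /=; apply: ler_sum => i _.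
    apply: le_trans; first exact: ler_normB.
    have pa : 0 <= pstar i by apply: ltW; exact: ps.1 i.
    have qa : 0 <= q i.
      by rewrite /q; apply: mulr_ge0; [have /andP[] := x01 i|apply: prodr_ge0 => l _; have /andP[] := cl1 l].
    by rewrite !ger0_norm.
  have s2 : \sum_(N <= i < M) pstar i <= T.
    have := le1 M; rewrite (@sum_split R pstar N M (ltnW MN)).
    rewrite /T; lra.
  have s3 : \sum_(N <= i < M) q i <= Q.
    have := stick_tel x M; rewrite (@sum_split R (fun i => x i * \prod_(l < i) (1 - x l)) N M (ltnW MN)).
    rewrite stick_tel -/Q => h.
    have : 0 <= \prod_(l < M) (1 - x l) by apply: prodr_ge0 => l _; have /andP[] := cl1 l.
    rewrite /q; lra.
  lra.
apply: (@le_lt_trans _ _ (D + T + Q)%:E).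
  apply: eseries_le => n; first by rewrite lee_fin.
  by rewrite big_mkord sumEFin lee_fin.
rewrite lte_fin.
have hn : N%:R * (N%:R * delta) + N%:R * delta <= eps / 2.
  have := mulr_ge0 (sqr_ge0 (N%:R - 1 : R)) (ltW d0).
  have : 0 <= N%:R :> R by [].
  nra.
have tT : T < eps / 4 by exact: tailN.
lra.
Qed.

End Det.

Section Beta.
Variable R : realType.

Lemma powR_lb (c x r : R) : 0 < c -> c <= x -> x <= 1 -> Num.min (c `^ r) 1 <= x `^ r.
Proof.
move=> c0 cx x1; have x0 : 0 < x by apply: lt_le_trans cx.
have [r0|r0] := leP 0 r.
  rewrite ge_min; apply/orP; left.
  by apply: ge0_ler_powR => //; rewrite nnegrE ltW.
rewrite ge_min; apply/orP; right.
have -> : r = - (- r) by rewrite opprK.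
rewrite powRN invf_ge1; last by apply: powR_gt0.
have -> : (1:R) = 1 `^ (- r) by rewrite powR1.
apply: ge0_ler_powR; rewrite ?nnegrE; lra.
Qed.

Lemma measurable_beta (a b : R) : measurable_fun [set: R] (EFin \o beta_density a b).
Proof.
apply/measurable_EFinP; rewrite /beta_density; apply: measurable_funM.
  exact: measurable_powR.
change (measurable_fun setT ((@powR R ^~ (b - 1)) \o (fun x : R => 1 - x))).
apply: measurableT_comp; first exact: measurable_powR.
by apply: measurable_funB => //; exact: measurable_cst.
Qed.

Lemma beta_ge0 (a b x : R) : 0 <= beta_density a b x.
Proof. by apply: mulr_ge0; apply: powR_ge0. Qed.

Lemma beta_int_pos (a b c e : R) : 0 <= c -> c < e -> e <= 1 ->
  (0 < \int[lebesgue_measure]_(x in `]c, e[) (beta_density a b x)%:E)%E.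
Proof.
move=> c0 ce e1.
set c' := c + (e - c) / 3; set e' := e - (e - c) / 3.
have c'0 : 0 < c' by rewrite /c'; lra.
have e'1 : 0 < 1 - e' by rewrite /e'; lra.
set m := Num.min (c' `^ (a - 1)) 1 * Num.min ((1 - e') `^ (b - 1)) 1.
have m0 : 0 < m.
  by apply: mulr_gt0; rewrite lt_min ltr01 andbT powR_gt0.
have sub : `[c', e'] `<=` `]c, e[.
  move=> x /=; rewrite !in_itv /= => /andP[h1 h2]; apply/andP; split; rewrite /c' /e' in h1 h2; lra.
have I1 : (0 < \int[lebesgue_measure]_(x in `[c', e']) (cst m%:E) x)%E.
  rewrite integral_cst //= lebesgue_measure_itv /= lte_fin.
  have -> : (c' < e') = true by apply/idP; rewrite /c' /e'; lra.
  by rewrite -EFinD -EFinM lte_fin; apply: mulr_gt0 => //; rewrite subr_gt0 /c' /e'; lra.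
have I2 : (\int[lebesgue_measure]_(x in `[c', e']) (cst m%:E) x <=
           \int[lebesgue_measure]_(x in `[c', e']) (beta_density a b x)%:E)%E.
  apply: ge0_le_integral => //.
  - by move=> x _; rewrite lee_fin ltW.
  - exact: measurable_funS (measurable_beta a b).
  move=> x /=; rewrite in_itv /= => /andP[h1 h2]; rewrite lee_fin /beta_density.
  apply: ler_pM => //; first by rewrite le_min ler01 andbT powR_ge0.
    by rewrite le_min ler01 andbT powR_ge0.
    by apply: powR_lb => //; lra.
  by apply: powR_lb => //; lra.
have I3 : (\int[lebesgue_measure]_(x in `[c', e']) (beta_density a b x)%:E <=
           \int[lebesgue_measure]_(x in `]c, e[) (beta_density a b x)%:E)%E.
  apply: ge0_subset_integral => //.
  - exact: measurable_funS (measurable_beta a b).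
  - by move=> x _; rewrite lee_fin beta_ge0.
exact: (lt_le_trans (lt_le_trans I1 I2) I3).
Qed.

End Beta.

Section Prob.
Variables (R : realType) (d : measure_display) (T : measurableType d) (P : probability T R).

Lemma beta_itv_pos (V : T -> R) (a b c e : R) : has_beta_law P V a b ->
  0 <= c -> c < e -> e <= 1 -> (0 < P (V @^-1` `]c, e[))%E.
Proof.
move=> H c0 ce e1.
have hT := H setT measurableT.
rewrite preimage_setT probability_setT setTI in hT.
set Z := (\int[lebesgue_measure]_(x in `]0%R, 1%R[) (beta_density a b x)%:E)%E in hT.
have Z0 : (0 <= Z)%E by apply: integral_ge0 => x _; rewrite lee_fin beta_ge0.
have Zi : (0 < Z^-1)%E.
  rewrite lt0e inve_ge0 Z0 andbT; apply/eqP => h; move: hT; rewrite h mule0 => /eqP.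
  by rewrite onee_eq0.
rewrite H; last exact: measurable_itv.
rewrite setIidl; last first.
  move=> x /=; rewrite !in_itv /= => /andP[h1 h2]; apply/andP; split; lra.
by apply: mule_gt0 => //; apply: beta_int_pos.
Qed.

Lemma beta_out_null (V : T -> R) (a b : R) : has_beta_law P V a b ->
  P (V @^-1` ~` `]0%R, 1%R[) = 0%E.
Proof.
move=> H; rewrite H; last by apply: measurableC; exact: measurable_itv.
by rewrite setICl integral_set0 mul0e.
Qed.


Lemma target_meas (V : nat -> T -> R) (pstar : nat -> R) (eps : R) :
  (forall i, measurable_fun setT (V i)) ->
  measurable [set w | (l1_dist pstar (stick_breaking V w) < eps%:E)%E].
Proof.
move=> mV.
have mf : measurable_fun setT (fun w => l1_dist pstar (stick_breaking V w)).
  rewrite /l1_dist.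
  have := @ge0_emeasurable_sum _ T R setT (fun i w => (`|pstar i - stick_breaking V w i|)%:E) predT.
  apply.
    by move=> k x _ _; rewrite lee_fin.
  move=> k _; apply/measurable_EFinP.
  change (measurable_fun setT ((fun x : R => `|x|) \o (fun w => pstar k - stick_breaking V w k))).
  apply: measurableT_comp; first exact: normr_measurable.
  apply: measurable_funB; first exact: measurable_cst.
  rewrite /stick_breaking; apply: measurable_funM; first exact: mV.
  apply: measurable_prod => l _.
  by apply: measurable_funB; [exact: measurable_cst | exact: mV].
have := measurable_lte measurableT mf (measurable_cst (eps%:E)).
by rewrite setTI.
Qed.

End Prob.

Lemma prode_gt0_seq (R : realType) (s : seq nat) (f : nat -> \bar R) :
  (forall i, 0 < f i)%E -> (0 < \prod_(i <- s) f i)%E.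
Proof.
move=> H; elim: s => [|x s IH]; first by rewrite big_nil lte01.
by rewrite big_cons; apply: mule_gt0.
Qed.

Theorem propositionS2 (R : realType) (d : measure_display) (T : measurableType d)
  (P : probability T R) (a b : nat -> R) (V : nat -> T -> R) :
  (forall i, 0 < a i) -> (forall i, 0 < b i) ->
  (forall i, measurable_fun setT (V i)) ->
  (forall i, has_beta_law P (V i) (a i) (b i)) ->
  mutually_independent P V ->
  forall (eps : R) (pstar : nat -> R), 0 < eps -> open_simplex pstar ->
  (0 < P [set w | (l1_dist pstar (stick_breaking V w) < eps%:E)%E])%E.
Proof.
move=> a0 b0 mV hB indep eps pstar e0 ps.
have [v [v01 prodv pv]] := @simplex_v R pstar ps.
have e4 : 0 < eps / 4 by apply: divr_gt0.
have [N tailN] := @simplex_tail R pstar (eps / 4) ps e4.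
have hpos : 0 < 4 * (N%:R * N%:R + 1) :> R.
  by apply: mulr_gt0 => //; apply: ltr_wpDl => //; apply: mulr_ge0.
set delta := eps / (4 * (N%:R * N%:R + 1)).
have hdelta : delta * (4 * (N%:R * N%:R + 1)) = eps by rewrite /delta divfK // gt_eqF.
have d0 : 0 < delta by apply: divr_gt0.
set c := fun i => Num.max (v i - delta) 0.
set e := fun i => Num.min (v i + delta) 1.
have ce : forall i, [/\ 0 <= c i, c i < e i & e i <= 1].
  move=> i; have /andP[vi0 vi1] := v01 i; split.
  - by rewrite /c le_max lexx orbT.
  - by rewrite /c /e lt_min !gt_max; apply/andP; split; apply/andP; split; lra.
  - by rewrite /e ge_min lexx orbT.
set A := \bigcap_(i in [set` iota 0 N]) (V i @^-1` [set` `]c i, e i[]).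
have PA : P A = (\prod_(i <- iota 0 N) P (V i @^-1` [set` `]c i, e i[]))%E.
  by apply: indep; [exact: iota_uniq | move=> i; exact: measurable_itv].
have PA0 : (0 < P A)%E.
  rewrite PA; apply: prode_gt0_seq => i.
  have [? ? ?] := ce i; exact: beta_itv_pos.
have mpre : forall i (B : set R), measurable B -> measurable (V i @^-1` B).
  by move=> i B mB; rewrite -[X in measurable X]setTI; apply: mV.
have negl : P.-negligible (\bigcup_i (V i @^-1` ~` [set` `]0%R, 1%R[])).
  apply: negligible_bigcup => k; exists (V k @^-1` ~` [set` `]0%R, 1%R[]); split => //.
  - by apply: mpre; apply: measurableC; exact: measurable_itv.
  - exact: beta_out_null.
have [N0 [mN0 PN0 subN0]] := negl.
set S := [set w | (l1_dist pstar (stick_breaking V w) < eps%:E)%E].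
have mS : measurable S by apply: target_meas.
have mA : measurable A.
  by apply: bigcap_measurableType => i _; apply: mpre; exact: measurable_itv.
have sub : A `<=` S `|` N0.
  move=> w Aw; case: (pselect (N0 w)) => [h|h]; [by right | left].
  have inside : forall i, 0 < V i w < 1.
    move=> i; case: (pselect ([set` `]0%R, 1%R[] (V i w))) => [|hn].
      by rewrite /= in_itv.
    by exfalso; apply: h; apply: subN0; exists i.
  have x01 : forall i, 0 <= V i w <= 1.
    by move=> i; have /andP[? ?] := inside i; apply/andP; split; lra.
  have close : forall i, (i < N)%N -> `|V i w - v i| < delta.
    move=> i iN; have := Aw i; rewrite /= mem_iota add0n iN => /(_ isT).
    rewrite in_itv /= /c /e gt_max lt_min => /andP[/andP[h1 _] /andP[h2 _]].
    rewrite ltr_norml; apply/andP; split; lra.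
  exact: (@det_bound R pstar v (fun i => V i w) N delta eps ps prodv pv v01 x01 close tailN hdelta e0).
have h := @le_measure _ _ _ P A (S `|` N0).
rewrite !inE in h; have := h mA (measurableU _ _ mS mN0) sub.
move=> h'; apply: (lt_le_trans PA0); rewrite -(measureU0 mS mN0 PN0); exact: h'.
Qed.
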